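(* Let $s\geq 3$, let $p,q$ be coprime integers with $q>0$ and $p-(4s+7)q\geq 0$, and let $k\in G_{K_s}(p,q)$ satisfy $M=k^q$, $L=k^{-p}$. Let $P$ be a partially ordered set on which $G_{K_s}(p,q)$ acts (on the right) by order-preserving bijections. Suppose $x\in P$ satisfies one of: (1) $xk=x$, and $x$ and $xl$ are comparable in $P$; or (2) $xl=x$, and $x$ and $xk$ are comparable in $P$. Then $xg=x$ for every $g\in G_{K_s}(p,q)$.
   Context: Let $R=c\,l\,c\,l^{-1}c^{-1}l^{-s}c^{-1}l^{-1}c\,l\,c\,l^{s-1}$, $M=c$ and $L=c^{-(2s-2)}\,l\,c\,l^{s}\,c\,l^{s}\,c\,l\,c^{-(2s+9)}$, and $G_{K_s}(p,q)=\langle c,l\mid R,\ M^pL^q\rangle$. For an action we write $xg$ for the image of $x$ under $g$, and $xg_1g_2=(xg_1)g_2$. Two elements $x,y$ of $P$ are comparable if $x<y$, $x=y$ or $x>y$. *)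

(* Defs.v *)
From Stdlib Require Import ZArith List.
Import ListNotations.
Open Scope Z_scope.

Inductive word : Type :=
| wc : word
| wl : word
| w1 : word
| wmul : word -> word -> word
| winv : word -> word.

Fixpoint wpow_nat (w : word) (n : nat) : word :=
  match n with
  | O => w1
  | S n' => wmul (wpow_nat w n') w
  end.

Definition wpow (w : word) (z : Z) : word :=
  match z with
  | Z0 => w1
  | Zpos p => wpow_nat w (Pos.to_nat p)
  | Zneg p => winv (wpow_nat w (Pos.to_nat p))
  end.

Definition wprod (ws : list word) : word := fold_left wmul ws w1.

Definition relR (s : Z) : word :=
  wprod [wc; wl; wc; winv wl; winv wc; wpow wl (-s); winv wc; winv wl;
         wc; wl; wc; wpow wl (s - 1)].

Definition wordM : word := wc.

Definition wordL (s : Z) : word :=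
  wprod [wpow wc (-(2*s - 2)); wl; wc; wpow wl s; wc; wpow wl s; wc; wl;
         wpow wc (-(2*s + 9))].

(* Equality in G_{K_s}(p,q) = < c, l | R, M^p L^q >: the smallest congruence
   on words containing the group axioms and the two relators. *)
Inductive weq (s p q : Z) : word -> word -> Prop :=
| weq_refl a : weq s p q a a
| weq_sym a b : weq s p q a b -> weq s p q b a
| weq_trans a b d : weq s p q a b -> weq s p q b d -> weq s p q a d
| weq_mul a a' b b' : weq s p q a a' -> weq s p q b b' ->
    weq s p q (wmul a b) (wmul a' b')
| weq_inv a a' : weq s p q a a' -> weq s p q (winv a) (winv a')
| weq_assoc a b d : weq s p q (wmul (wmul a b) d) (wmul a (wmul b d))
| weq_id_l a : weq s p q (wmul w1 a) a
| weq_id_r a : weq s p q (wmul a w1) a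
| weq_inv_l a : weq s p q (wmul (winv a) a) w1
| weq_inv_r a : weq s p q (wmul a (winv a)) w1
| weq_relR : weq s p q (relR s) w1
| weq_relML : weq s p q (wmul (wpow wordM p) (wpow (wordL s) q)) w1.

Definition is_poset {P : Type} (le : P -> P -> Prop) : Prop :=
  (forall x, le x x) /\
  (forall x y, le x y -> le y x -> x = y) /\
  (forall x y z, le x y -> le y z -> le x z).

Definition comparable {P : Type} (le : P -> P -> Prop) (x y : P) : Prop :=
  le x y \/ x = y \/ le y x.

(* A right action of G_{K_s}(p,q) on P by order-preserving bijections,
   given on words; act x g is "xg". It must be well defined on G. *)
Definition is_order_action (s p q : Z) {P : Type} (le : P -> P -> Prop)
    (act : P -> word -> P) : Prop :=
  (forall g h, weq s p q g h -> forall x, act x g = act x h) /\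
  (forall x, act x w1 = x) /\
  (forall x g h, act x (wmul g h) = act (act x g) h) /\
  (forall g x y, le x y -> le (act x g) (act y g)) /\
  (forall g, (forall x y, act x g = act y g -> x = y) /\
             (forall y, exists x, act x g = y)).

(* Main.v *)
Require Import Defs.
From Stdlib Require Import ZArith List Lia Arith Classical.
Open Scope Z_scope.

Lemma iter_ext {A} (g h : A -> A) n z : (forall y, g y = h y) -> Nat.iter n g z = Nat.iter n h z.
Proof. intro E; induction n; simpl; [reflexivity| rewrite IHn, E; reflexivity]. Qed.

Lemma iter_cancel {A} (f g : A -> A) : (forall z, f (g z) = z) -> forall n z, Nat.iter n f (Nat.iter n g z) = z.
Proof.
  intros E n; induction n; intro z; [reflexivity|].
  rewrite (Nat.iter_succ_r n A f). change (Nat.iter (S n) g z) with (g (Nat.iter n g z)).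
  rewrite E. apply IHn.
Qed.

Lemma iter_mul {A} (f : A -> A) n m z : Nat.iter n (Nat.iter m f) z = Nat.iter (n*m) f z.
Proof.
  induction n; [reflexivity|]. simpl. rewrite IHn, <- Nat.iter_add. reflexivity.
Qed.

Lemma iter_fix {A} (f : A -> A) n z : f z = z -> Nat.iter n f z = z.
Proof. intro E; induction n; simpl; [reflexivity| rewrite IHn; exact E]. Qed.

Lemma wpow_pos w z : 0 < z -> wpow w z = wpow_nat w (Z.to_nat z).
Proof. destruct z; intros; try lia; reflexivity. Qed.
Lemma wpow_neg w z : z < 0 -> wpow w z = winv (wpow_nat w (Z.to_nat (- z))).
Proof. destruct z; intros; try lia; reflexivity. Qed.

Section Act.
Variables (s p q : Z) (P : Type) (act : P -> word -> P).
Hypothesis Hweq : forall g h, weq s p q g h -> forall x, act x g = act x h.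
Hypothesis H1 : forall x, act x w1 = x.
Hypothesis Hmul : forall x g h, act x (wmul g h) = act (act x g) h.
Hypothesis Hinj : forall g x y, act x g = act y g -> x = y.

Lemma act_invK x w : act (act x (winv w)) w = x.
Proof. rewrite <- Hmul, (Hweq _ _ (weq_inv_l _ _ _ w)); apply H1. Qed.
Lemma act_Kinv x w : act (act x w) (winv w) = x.
Proof. rewrite <- Hmul, (Hweq _ _ (weq_inv_r _ _ _ w)); apply H1. Qed.
Lemma act_inv_eq x z w : act z w = x -> act x (winv w) = z.
Proof. intro E; apply (Hinj w); rewrite act_invK; auto. Qed.
Lemma act_fold ws a x : act x (fold_left wmul ws a) = fold_left act ws (act x a).
Proof.
  revert a; induction ws as [|b ws IH]; intro a; simpl; [reflexivity|].
  rewrite IH, Hmul; reflexivity.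
Qed.
Lemma act_wprod ws x : act x (wprod ws) = fold_left act ws x.
Proof. unfold wprod; rewrite act_fold, H1; reflexivity. Qed.
Lemma act_pow_nat w n x : act x (wpow_nat w n) = Nat.iter n (fun y => act y w) x.
Proof. induction n; simpl; [apply H1| rewrite Hmul, IHn; reflexivity]. Qed.
Lemma act_inv_pow w n x : act x (winv (wpow_nat w n)) = Nat.iter n (fun y => act y (winv w)) x.
Proof.
  apply act_inv_eq. rewrite act_pow_nat. apply iter_cancel. intros; apply act_invK.
Qed.

Lemma fix_all x : act x wc = x -> act x wl = x -> forall g, act x g = x.
Proof.
  intros Hc Hl g; induction g; auto.
  - rewrite Hmul, IHg1; auto.
  - apply act_inv_eq; auto.
Qed.

Definition Wf y := act (act (act (act (act (act (act y wl) wc) (wpow wl s)) wc) (wpow wl s)) wc) wl.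

Lemma act_L y : act y (wordL s) =
  act (Wf (act y (wpow wc (-(2*s-2))))) (wpow wc (-(2*s+9))).
Proof. unfold wordL; rewrite act_wprod; reflexivity. Qed.

Variable le : P -> P -> Prop.
Hypothesis Hrefl : forall x, le x x.
Hypothesis Hanti : forall x y, le x y -> le y x -> x = y.
Hypothesis Htrans : forall x y z, le x y -> le y z -> le x z.
Hypothesis Hmono : forall g x y, le x y -> le (act x g) (act y g).

Definition lt x y := le x y /\ x <> y.
Definition good x g := forall y, lt x y -> lt x (act y g).

Lemma good_base x g : le x (act x g) -> good x g.
Proof.
  intros H y [Hle Hne]. split.
  - eapply Htrans; [exact H| apply Hmono; exact Hle].
  - intro E. apply Hne. apply (Hinj g). apply Hanti.
    + apply Hmono; exact Hle.
    + rewrite <- E; exact H.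
Qed.

Lemma good_pownat x g n : good x g -> good x (wpow_nat g n).
Proof.
  intros G; induction n; intros y Hy; simpl; [rewrite H1; auto|].
  rewrite Hmul; apply G, IHn, Hy.
Qed.

Lemma iter_up (f : P -> P) y n : (forall a b, le a b -> le (f a) (f b)) -> le y (f y) -> le y (Nat.iter n f y).
Proof.
  intros M H; induction n; simpl; [apply Hrefl|].
  eapply Htrans; [exact H| apply M, IHn].
Qed.
Lemma iter_down (f : P -> P) y n : (forall a b, le a b -> le (f a) (f b)) -> le (f y) y -> le (Nat.iter n f y) y.
Proof.
  intros M H; induction n; simpl; [apply Hrefl|].
  eapply Htrans; [apply M, IHn| exact H].
Qed.

Variable k : word.
Hypothesis hs : 3 <= s.
Hypothesis hq : 0 < q.
Hypothesis hpq : 0 <= p - (4 * s + 7) * q.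
Hypothesis hkM : weq s p q wordM (wpow k q).
Hypothesis hkL : weq s p q (wordL s) (wpow k (- p)).

Lemma Hc y : act y wc = Nat.iter (Z.to_nat q) (fun z => act z k) y.
Proof.
  change wc with wordM. rewrite (Hweq _ _ hkM), wpow_pos by lia. apply act_pow_nat.
Qed.
Lemma HL y : act y (wordL s) = Nat.iter (Z.to_nat p) (fun z => act z (winv k)) y.
Proof.
  rewrite (Hweq _ _ hkL), wpow_neg by lia. rewrite Z.opp_involutive. apply act_inv_pow.
Qed.

Lemma Hgood_tail x : good x wl -> good x wc ->
  forall y, lt x y -> lt x (act (act (act (act (act (act y wc) (wpow wl s)) wc) (wpow wl s)) wc) wl).
Proof.
  intros Gl Gc y Hy.
  assert (Gs : good x (wpow wl s)) by (rewrite wpow_pos by lia; apply good_pownat, Gl).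
  apply Gl, Gc, Gs, Gc, Gs, Gc, Hy.
Qed.

Lemma case1_core x : act x k = x -> lt x (act x wl) -> False.
Proof.
  intros Hk Hl.
  assert (Hcx : act x wc = x) by (rewrite Hc; apply iter_fix; exact Hk).
  assert (Hcn : forall n, act x (wpow_nat wc n) = x) by (intro n; rewrite act_pow_nat; apply iter_fix; exact Hcx).
  assert (Ha : act x (wpow wc (-(2*s-2))) = x)
    by (rewrite wpow_neg by lia; apply act_inv_eq, Hcn).
  assert (Hfi : act x (winv k) = x) by (apply act_inv_eq; exact Hk).
  assert (HLx : act x (wordL s) = x) by (rewrite HL; apply iter_fix; exact Hfi).
  rewrite act_L, Ha in HLx.
  rewrite wpow_neg in HLx by lia.
  assert (HW : Wf x = x).
  { rewrite <- (act_invK (Wf x) (wpow_nat wc (Z.to_nat (- - (2 * s + 9))))), HLx. apply Hcn. }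
  assert (Gl : good x wl) by (apply good_base; apply Hl).
  assert (Gc : good x wc) by (apply good_base; rewrite Hcx; apply Hrefl).
  pose proof (Hgood_tail x Gl Gc _ Hl) as T. fold (Wf x) in T. rewrite HW in T.
  destruct T as [_ T]; apply T; reflexivity.
Qed.

Lemma case2_core x : act x wl = x -> lt x (act x k) -> False.
Proof.
  intros Hlx [Hk Hkne].
  set (f := fun z => act z k). set (fi := fun z => act z (winv k)).
  set (nq := Z.to_nat q). set (np := Z.to_nat p).
  set (na := Z.to_nat (2*s-2)). set (nb := Z.to_nat (2*s+9)).
  assert (Hcn : forall n z, act z (wpow_nat wc n) = Nat.iter (n*nq) f z).
  { intros n z. rewrite act_pow_nat, <- iter_mul. apply iter_ext. intro; apply Hc. }
  set (x' := act x (wpow_nat wc na)).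
  assert (Ha : act x' (wpow wc (-(2*s-2))) = x).
  { rewrite wpow_neg by lia. rewrite Z.opp_involutive. apply act_inv_eq. reflexivity. }
  assert (HLx := act_L x'). rewrite Ha, HL in HLx.
  rewrite wpow_neg, Z.opp_involutive in HLx by lia. fold nb np in HLx.
  assert (HW : Wf x = Nat.iter (nb*nq) f (Nat.iter np fi x')).
  { rewrite <- (act_invK (Wf x) (wpow_nat wc nb)), <- HLx, Hcn. reflexivity. }
  assert (Hnp : ((na + nb) * nq <= np)%nat).
  { unfold na, nb, nq, np. apply Nat2Z.inj_le. rewrite Nat2Z.inj_mul, Nat2Z.inj_add, !Z2Nat.id by lia. nia. }
  set (r := (np - (na + nb) * nq)%nat).
  assert (Er : (np = nb*nq + (r + na*nq))%nat) by (unfold r; nia).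
  assert (HW2 : Wf x = Nat.iter r fi x).
  { rewrite HW, Er, !Nat.iter_add, iter_cancel by (intro; apply act_invK).
    f_equal. unfold x'. rewrite Hcn. apply iter_cancel. intro; apply act_Kinv. }
  assert (Hfix : le (fi x) x).
  { rewrite <- (act_Kinv x k) at 2. apply Hmono, Hk. }
  assert (Hle : le (Wf x) x) by (rewrite HW2; apply iter_down; [intros; apply Hmono; auto| exact Hfix]).
  assert (Hcx : lt x (act x wc)).
  { rewrite Hc. fold f. split.
    - apply iter_up; [intros; apply Hmono; auto| exact Hk].
    - intro E. apply Hkne. apply Hanti; [exact Hk|].
      assert (Hnq : Z.to_nat q = S (pred (Z.to_nat q))) by lia.
      rewrite Hnq in E. rewrite E at 2. rewrite Nat.iter_succ_r. apply iter_up; [intros; apply Hmono; auto|].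
      apply Hmono, Hk. }
  assert (Gl : good x wl) by (apply good_base; rewrite Hlx; apply Hrefl).
  assert (Gc : good x wc) by (apply good_base; apply Hcx).
  assert (Gs : good x (wpow wl s)) by (rewrite wpow_pos by lia; apply good_pownat, Gl).
  assert (T : lt x (Wf x)) by (unfold Wf; rewrite Hlx; apply Gl, Gc, Gs, Gc, Gs, Hcx).
  destruct T as [T1 T2]; apply T2, Hanti; auto.
Qed.

End Act.

Theorem lemma3p3 (s p q : Z) (hs : 3 <= s) (hcop : Z.gcd p q = 1)
  (hq : 0 < q) (hpq : 0 <= p - (4 * s + 7) * q)
  (k : word) (hkM : weq s p q wordM (wpow k q))
  (hkL : weq s p q (wordL s) (wpow k (- p)))
  (P : Type) (le : P -> P -> Prop) (hP : is_poset le)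
  (act : P -> word -> P) (hact : is_order_action s p q le act)
  (x : P)
  (hx : (act x k = x /\ comparable le x (act x wl)) \/
        (act x wl = x /\ comparable le x (act x k))) :
  forall g : word, act x g = x.
Proof.
  destruct hP as [Hrefl [Hanti Htrans]].
  destruct hact as [Hweq [H1 [Hmul [Hmono Hbij]]]].
  assert (Hinj : forall g x y, act x g = act y g -> x = y) by (intros g; apply Hbij).
  assert (Hrefl' : forall x, (fun a b => le b a) x x) by auto.
  assert (Hanti' : forall x y, (fun a b => le b a) x y -> (fun a b => le b a) y x -> x = y)
    by (intros; apply Hanti; auto).
  assert (Htrans' : forall x y z, (fun a b => le b a) x y -> (fun a b => le b a) y z -> (fun a b => le b a) x z)
    by (intros a b d ? ?; eapply Htrans; eauto).
  assert (Hmono' : forall g x y, (fun a b => le b a) x y -> (fun a b => le b a) (act x g) (act y g))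
    by (intros; apply Hmono; auto).
  assert (Hkc : act x k = x -> act x wc = x).
  { intro E. rewrite (Hc s p q P act Hweq H1 Hmul k hq hkM). apply iter_fix; exact E. }
  pose proof (case1_core s p q P act Hweq H1 Hmul Hinj le Hrefl Hanti Htrans Hmono k hs hq hpq hkM hkL x) as C1.
  pose proof (case1_core s p q P act Hweq H1 Hmul Hinj _ Hrefl' Hanti' Htrans' Hmono' k hs hq hpq hkM hkL x) as C1'.
  pose proof (case2_core s p q P act Hweq H1 Hmul Hinj le Hrefl Hanti Htrans Hmono k hs hq hpq hkM hkL x) as C2.
  pose proof (case2_core s p q P act Hweq H1 Hmul Hinj _ Hrefl' Hanti' Htrans' Hmono' k hs hq hpq hkM hkL x) as C2'.
  unfold lt in C1, C1', C2, C2'.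
  destruct hx as [[Hk Hc1] | [Hl Hc2]].
  - assert (Hl : act x wl = x).
    { destruct (classic (x = act x wl)) as [E|NE]; [symmetry; exact E|].
      exfalso. destruct Hc1 as [H|[H|H]]; [exact (C1 Hk (conj H NE)) | exact (NE H)
        | exact (C1' Hk (conj H NE))]. }
    apply (fix_all s p q P act Hweq H1 Hmul Hinj); auto.
  - assert (Hk : act x k = x).
    { destruct (classic (x = act x k)) as [E|NE]; [symmetry; exact E|].
      exfalso. destruct Hc2 as [H|[H|H]]; [exact (C2 Hl (conj H NE)) | exact (NE H)
        | exact (C2' Hl (conj H NE))]. }
    apply (fix_all s p q P act Hweq H1 Hmul Hinj); auto.
Qed.
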